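(* Suppose $\frac{\Delta_L}{\overline{\Delta}_L}\le\sqrt{n}$. Let $\epsilon\in(0,1)$ and $c\ge1$ a constant, and sample $n_b=\frac{c}{1-\epsilon}\Delta$ batches, each consisting of $B=(1-\epsilon)\frac{n}{\Delta}$ updates drawn uniformly at random with replacement from the $n$ updates. For the $i$-th batch let $G_u^i$ be the subgraph of $G_u$ induced by its sampled updates and $E_u^i$ its number of edges. Then the total number of edges $Z=\sum_{i=1}^{n_b}E_u^i$ is less than $O(E_u\log n)$ with probability $1-n^{-\Omega(\log n)}$.
   Context: $G_u$ is a bipartite graph whose left vertices are $n$ updates $u_1,\dots,u_n$ and whose right vertices are $d$ model variables, with $u_i$ adjacent to a variable iff the update reads or writes it; $E_u$ is its number of edges, $\Delta_L$ its maximum left degree and $\overline{\Delta}_L$ its average left degree. The conflict graph on the updates joins two updates iff they share a variable; $\Delta$ is its maximum degree. The induced subgraph of a batch consists of the sampled updates together with all their incident edges and adjacent variables. *)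

(* Defs.v *)
From HB Require Import structures.
From mathcomp Require Import all_boot all_order all_algebra.
From mathcomp Require Import all_classical all_reals all_analysis.
Set Implicit Arguments. Unset Strict Implicit. Unset Printing Implicit Defensive.
Import Order.TTheory GRing.Theory Num.Theory.
Local Open Scope ring_scope.

(* The bipartite graph G_u: updates 'I_n on the left, variables 'I_d on the
   right; [adj i v] iff update i reads or writes variable v. *)
Section Graph.
Variables (n d : nat) (adj : 'I_n -> 'I_d -> bool).

Definition ldeg (i : 'I_n) : nat := #|[set v | adj i v]|.

Definition Eu : nat := (\sum_(i < n) ldeg i)%N.

Definition DeltaL : nat := (\max_(i < n) ldeg i)%N.

Definition conflict (i j : 'I_n) : bool :=
  (i != j) && [exists v, adj i v && adj j v].

Definition Delta : nat := (\max_(i < n) #|[set j | conflict i j]|)%N.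

(* number of edges of the subgraph induced by the updates sampled in a
   batch s (a sequence of B draws, with replacement): the set of distinct
   sampled updates together with all their incident edges *)
Definition batch_edges (B : nat) (s : {ffun 'I_B -> 'I_n}) : nat :=
  (\sum_(i in [set s k | k : 'I_B]) ldeg i)%N.

Definition Ztot (nb B : nat) (w : {ffun 'I_nb -> {ffun 'I_B -> 'I_n}}) : nat :=
  (\sum_(b < nb) batch_edges (w b))%N.
End Graph.

Definition unif_prob (R : realType) (T : finType) (A : {set T}) : R :=
  #|A|%:R / #|T|%:R.

(* Main.v *)
Require Import Defs.
From HB Require Import structures.
From mathcomp Require Import all_boot all_order all_algebra.
From mathcomp Require Import all_classical all_reals all_analysis.
From mathcomp Require Import ring lra.
Import Order.TTheory GRing.Theory Num.Theory.
Local Open Scope ring_scope.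

Lemma sum_imset_le (B n : nat) (s : {ffun 'I_B -> 'I_n}) (g : 'I_n -> nat) :
  (\sum_(i in [set s k | k : 'I_B]) g i <= \sum_(k < B) g (s k))%N.
Proof.
rewrite (partition_big s (fun j => j \in [set s k | k : 'I_B])) /=; last first.
  by move=> k _; apply/imsetP; exists k.
apply: leq_sum => j /imsetP [k _ ->].
by rewrite (bigD1 k) //= leq_addr.
Qed.

Lemma pow_bound (R : realFieldType) (x : R) (l : nat) :
  0 <= x -> 2 * l%:R * x <= 1 -> (1 + x) ^+ l <= 1 + 2 * l%:R * x.
Proof.
move=> x0; elim: l => [|l IH] h; first by rewrite expr0 mulr0n mulr0 mul0r addr0.
have h' : 2 * l%:R * x <= 1.
  apply: le_trans h; rewrite -!mulrA ler_pM2l // ler_wpM2r //.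
  by rewrite ler_nat.
rewrite exprS mulrC.
apply: le_trans (_ : (1 + 2 * l%:R * x) * (1 + x) <= _).
  apply: ler_wpM2r; first by rewrite addr_ge0.
  exact: IH.
move: h; rewrite -natr1 => h.
have l0 : 0 <= (l%:R : R) by [].
nra.
Qed.

Lemma sum_prod (R : comPzRingType) (nb B n : nat) (F : 'I_n -> R) :
  \sum_(w : {ffun 'I_nb -> {ffun 'I_B -> 'I_n}}) \prod_(b < nb) \prod_(k < B) F (w b k)
  = ((\sum_i F i) ^+ B) ^+ nb.
Proof.
have e1 : forall s : {ffun 'I_B -> 'I_n}, True by [].
rewrite -(bigA_distr_bigA (fun (b : 'I_nb) (s : {ffun 'I_B -> 'I_n}) => \prod_(k < B) F (s k))) /=.
rewrite -[in RHS](card_ord nb) -prodr_const.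
apply: eq_bigr => b _.
rewrite -(bigA_distr_bigA (fun (k : 'I_B) (i : 'I_n) => F i)) /=.
by rewrite -[in RHS](card_ord B) -prodr_const.
Qed.

Theorem lemma3 (R : realType) (eps c : R) :
  0 < eps < 1 -> 1 <= c ->
  exists (C kappa : R) (N : nat), 0 < C /\ 0 < kappa /\
  forall (n d : nat) (adj : 'I_n -> 'I_d -> bool) (nb B : nat),
    (N <= n)%N ->
    (DeltaL adj)%:R / ((Eu adj)%:R / n%:R) <= Num.sqrt (n%:R : R) ->
    (* nb = floor (c / (1 - eps) * Delta) *)
    nb%:R <= c / (1 - eps) * (Delta adj)%:R < nb%:R + 1 ->
    (* B = floor ((1 - eps) * n / Delta) *)
    B%:R <= (1 - eps) * n%:R / (Delta adj)%:R < B%:R + 1 ->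
    unif_prob R
      [set w : {ffun 'I_nb -> {ffun 'I_B -> 'I_n}} |
         C * (Eu adj)%:R * ln (n%:R : R) < (Ztot adj w)%:R]
    <= (n%:R : R) `^ (- (kappa * ln (n%:R : R))).
Proof.
move=> /andP[eps0 eps1] c1.
exists (9 * c), 2^-1, 2%N.
split; first by rewrite mulr_gt0 //; lra.
split; first by rewrite invr_gt0.
move=> n d adj nb B n2 Hsq /andP[Hnb _] /andP[HB _].
set l := ldeg adj.
set M := DeltaL adj.
set E := Eu adj.
set L := ln (n%:R : R).
set A := [set w | _].
have nR2 : (2 : R) <= n%:R by rewrite ler_nat.
have nR0 : (0 : R) < n%:R by lra.
have L12 : 2^-1 <= L.
  have ni0 : (0 : R) < n%:R^-1 by rewrite invr_gt0.
  have h : ln (n%:R^-1 : R) <= n%:R^-1 - 1.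
    have := @le_ln1Dx R (n%:R^-1 - 1).
    rewrite addrCA subrr addr0; apply; lra.
  rewrite lnV ?posrE // in h.
  have e : n%:R^-1 * n%:R = 1 :> R by rewrite mulVf // gt_eqF.
  have : n%:R^-1 <= (2 : R)^-1 by nra.
  rewrite /L; lra.
have L0 : 0 <= L by lra.
have RHS : (n%:R : R) `^ (- (2^-1 * L)) = expR (- (2^-1 * L) * L).
  by rewrite /powR gt_eqF.
rewrite RHS /unif_prob.
have Hli : forall i, (l i <= M)%N by move=> i; exact: leq_bigmax.
case: (posnP M) => [M0 | Mpos].
  have li0 : forall i, l i = 0%N by move=> i; apply/eqP; rewrite -leqn0 -M0.
  have -> : A = finset.set0.
    apply/setP => w; rewrite !inE /Ztot big1 ?ltxx //=.
      rewrite ltNge mulr_ge0 ?mulr_ge0 //; lra.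
    by move=> b _; rewrite /batch_edges big1.
  by rewrite cards0 mul0r expR_ge0.
have HME : (M <= E)%N.
  rewrite /M /DeltaL; apply/bigmax_leqP => i _; by rewrite /E /Eu (bigD1 i) //= leq_addr.
have MR0 : (0 : R) < M%:R by rewrite ltr0n.
have ER0 : (0 : R) < E%:R by rewrite ltr0n; exact: leq_trans Mpos HME.
set K := E%:R / M%:R : R.
set s := Num.sqrt (n%:R : R).
have s0 : 0 < s by rewrite sqrtr_gt0.
have ss : s * s = n%:R by rewrite -expr2 sqr_sqrtr // ltW.
have K0 : 0 < K by rewrite divr_gt0.
have sK : s <= K.
  have e1 : M%:R / (E%:R / n%:R) = n%:R / K :> R.
    by rewrite /K; field; rewrite !gt_eqF.
  move: Hsq; rewrite -/M -/E e1 ler_pdivrMr // -[X in X <= _]ss => Hsq.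
  have Hs : s * s <= s * K by exact: Hsq.
  nra.
have M1 : 1 <= (M%:R : R) by rewrite ler1n.
set x := (2 * M%:R)^-1 : R.
have x0 : 0 < x by rewrite invr_gt0 mulr_gt0.
set q := 1 + x.
have q0 : 0 < q by rewrite /q; lra.
have Hq : forall i, q ^+ l i <= 1 + (l i)%:R / M%:R.
  move=> i.
  have e : 2 * (l i)%:R * x = (l i)%:R / M%:R.
    by rewrite /x; field; rewrite gt_eqF.
  rewrite -e; apply: pow_bound; first exact: ltW.
  by rewrite e ler_pdivrMr // mul1r ler_nat; exact: Hli.
have lam_lb : (3 * M%:R)^-1 <= ln q.
  have qi0 : 0 < q^-1 by rewrite invr_gt0.
  have h : ln (q^-1) <= q^-1 - 1.
    have := @le_ln1Dx R (q^-1 - 1).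
    rewrite addrCA subrr addr0; apply; lra.
  rewrite lnV ?posrE // in h.
  have e : 1 - q^-1 = (2 * M%:R + 1)^-1.
    rewrite /q /x; field.
    by rewrite !gt_eqF //; lra.
  have : (3 * M%:R)^-1 <= (2 * M%:R + 1)^-1 :> R.
    rewrite lef_pV2 ?posrE; lra.
  lra.
pose S (w : {ffun 'I_nb -> {ffun 'I_B -> 'I_n}}) :=
  (\sum_(b < nb) \sum_(k < B) l (w b k))%N.
have ZS : forall w, (Ztot adj w <= S w)%N.
  by move=> w; rewrite /Ztot; apply: leq_sum => b _; exact: sum_imset_le.
have lq0 : 0 <= ln q.
  apply: le_trans lam_lb; rewrite invr_ge0; lra.
set t := 9 * c * E%:R * L.
have cnt : #|A|%:R * expR (t * ln q) <= \sum_w q ^+ S w.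
  rewrite mulr_natl -sumr_const [X in X <= _]big_mkcond /=.
  apply: ler_sum => w _; case: ifP => wA; last exact: exprn_ge0 (ltW q0).
  have -> : q ^+ S w = expR ((S w)%:R * ln q) by rewrite expRM_natl lnK ?posrE.
  rewrite ler_expR; apply: ler_wpM2r => //.
  rewrite inE in wA; apply: ltW; apply: lt_le_trans wA _.
  by rewrite ler_nat.
have sumeq : \sum_w q ^+ S w = ((\sum_i q ^+ l i) ^+ B) ^+ nb.
  rewrite -sum_prod; apply: eq_bigr => w _; rewrite /S expr_sum.
  by apply: eq_bigr => b _; rewrite expr_sum.
have sumle : \sum_i q ^+ l i <= n%:R * (1 + K / n%:R).
  apply: le_trans (ler_sum _ (fun i _ => Hq i)) _.
  rewrite big_split /= sumr_const card_ord -mulr_suml -natr_sum.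
  rewrite le_eqVlt; apply/orP; left; apply/eqP; rewrite /K /E /Eu; field.
  by rewrite !gt_eqF.
have mB : nb%:R * B%:R <= c * n%:R.
  have B0 : (0 : R) <= B%:R by [].
  have nb0 : (0 : R) <= nb%:R by [].
  have e0 : 0 < 1 - eps by lra.
  case: (posnP (Delta adj)) => [D0 | Dpos].
    rewrite D0 invr0 mulr0 in HB.
    have -> : (B%:R : R) = 0 by lra.
    rewrite mulr0; apply: mulr_ge0; lra.
  have DR : (0 : R) < (Delta adj)%:R by rewrite ltr0n.
  apply: le_trans (ler_pM nb0 B0 Hnb HB) _.
  rewrite le_eqVlt; apply/orP; left; apply/eqP; field.
  by rewrite !gt_eqF.
set a := K / n%:R.
have a0 : 0 <= a by rewrite divr_ge0 // ltW.
have card : #|{: {ffun 'I_nb -> {ffun 'I_B -> 'I_n}}}| = ((n ^ B) ^ nb)%N.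
  by rewrite !card_ffun !card_ord.
have Ls : L <= 2 * s.
  have lsq : L = ln s + ln s by rewrite /L -ss lnM ?posrE.
  have : ln s <= s - 1.
    have := @le_ln1Dx R (s - 1); rewrite addrCA subrr addr0; apply; lra.
  lra.
have t0 : 0 <= t by rewrite /t !mulr_ge0 //; lra.
have tl : 3 * c * K * L <= t * ln q.
  apply: le_trans (ler_wpM2l t0 lam_lb).
  rewrite le_eqVlt; apply/orP; left; apply/eqP; rewrite /t /K; field.
  by rewrite gt_eqF.
have na : nb%:R * (B%:R * a) <= c * K.
  have -> : c * K = (c * n%:R) * a by rewrite /a; field; rewrite gt_eqF.
  by rewrite mulrA ler_wpM2r.
have h1 : 0 <= (c - 1) * (K * (3 * L - 1)) by rewrite mulr_ge0 ?mulr_ge0 //; lra.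
have h2 : 0 <= K * (2 * L - 1) by rewrite mulr_ge0 //; lra.
have h3 : 0 <= (K - s) * L by rewrite mulr_ge0 //; lra.
have h4 : 0 <= L * (2 * s - L) by rewrite mulr_ge0 //; lra.
have Y : nb%:R * (B%:R * a) - t * ln q <= - (2^-1 * L) * L by lra.
have X : ((1 + a) ^+ B) ^+ nb <= expR (nb%:R * (B%:R * a)).
  rewrite expRM_natl expRM_natl.
  apply: lerXn2r; rewrite ?nnegrE ?exprn_ge0 ?expR_ge0 //; first lra.
  apply: lerXn2r; rewrite ?nnegrE ?expR_ge0 //; first lra.
  exact: expR_ge1Dx.
have Z : ((1 + a) ^+ B) ^+ nb <= expR (- (2^-1 * L) * L) * expR (t * ln q).
  apply: le_trans X _; rewrite -expRD ler_expR; lra.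
set D := ((n%:R : R) ^+ B) ^+ nb.
have D0 : 0 < D by rewrite /D !exprn_gt0.
have e0 : 0 < expR (t * ln q) := expR_gt0 _.
rewrite card natrX natrX -/D ler_pdivrMr //.
rewrite -(ler_pM2r e0).
apply: le_trans cnt _; rewrite sumeq.
apply: le_trans (_ : ((n%:R * (1 + a)) ^+ B) ^+ nb <= _).
  apply: lerXn2r; rewrite ?nnegrE ?exprn_ge0 ?sumr_ge0 //.
  - by move=> i _; rewrite exprn_ge0 // ltW.
  - by rewrite mulr_ge0 //; lra.
  apply: lerXn2r; rewrite ?nnegrE ?sumr_ge0 //.
  - by move=> i _; rewrite exprn_ge0 // ltW.
  - by rewrite mulr_ge0 //; lra.
rewrite !exprMn -/D [_ * D]mulrC -mulrA ler_pM2l //.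
Qed.
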